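(* Let $R$ be a ring, let $X$ be an $R^\circ$-complex and let $Y$ be a bounded above $R$-complex with $\sup Y=k\in\mathbb{Z}$. Then for each $n\in\mathbb{Z}$ there is an exact sequence $$0\to{\lim}^1_{i\in\mathbb{N}}H_{n+1}(X\otimes_RY_{\le k-i})\to H_{n+1}(X\check\otimes_RY)\to{\lim}_{i\in\mathbb{N}}H_n(X\otimes_RY_{\le k-i})\to0,$$ where the inverse systems are those induced on homology by the inclusions $X\otimes_RY_{\le k-v}\to X\otimes_RY_{\le k-u}$ ($u\le v$). In particular, $H_{n+1}(X\check\otimes_RY)=0$ if and only if ${\lim}^1_{i}H_{n+1}(X\otimes_RY_{\le k-i})=0={\lim}_{i}H_n(X\otimes_RY_{\le k-i})$.
   Context: $H_n$ denotes the $n$th homology. For an $R$-complex $Y$, $\sup Y=\sup\{i: Y_i\neq0\}$ and $Y_{\le m}$ is the subcomplex with $(Y_{\le m})_i=Y_i$ for $i\le m$ and $0$ otherwise. $X\otimes_RY$ has degree-$n$ term $\coprod_iX_i\otimes_RY_{n-i}$ and differential $\partial(x\otimes y)=\partial^X(x)\otimes y+(-1)^{|x|}x\otimes\partial^Y(y)$; $X\bar\otimes_RY$ has degree-$n$ term $\prod_iX_i\otimes_RY_{n-i}$ with the same differential; $X\check\otimes_RY=(X\bar\otimes_RY)/(X\otimes_RY)$. For an $\mathbb{N}$-inverse system $\{\delta_{uv}:M_v\to M_u\}$ of modules, $\lim_iM_i$ and $\lim^1_iM_i$ are the kernel and cokernel of $\prod_iM_i\to\prod_iM_i$, $(m_i)\mapsto(m_i-\delta_{i,i+1}(m_{i+1}))$.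 *)

(* Defs.v *)
From HB Require Import structures.
From mathcomp Require Import all_boot all_order all_algebra.
Set Implicit Arguments. Unset Strict Implicit. Unset Printing Implicit Defensive.
Import Order.TTheory GRing.Theory Num.Theory.
Local Open Scope ring_scope.

(* A right R-module (R^o-module) is a left module over the converse ring R^c. *)
Record complex (S : pzRingType) := Complex {
  cobj :> int -> lmodType S;
  cdiff : forall i : int, {linear cobj (i + 1) -> cobj i};
  cdiff2 : forall (i : int) (x : cobj (i + 1 + 1)), cdiff i (cdiff (i + 1) x) = 0 }.

Definition sup_eq (S : pzRingType) (Y : complex S) (k : int) : Prop :=
  (exists y : Y k, y != 0) /\ (forall i : int, k < i -> forall y : Y i, y = 0).

(* Tensor product A (x)_R B of a right R-module A and a left R-module B.
   Its elements are finite sums of pure tensors, represented by lists of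
   pairs; such a list represents 0 in A (x)_R B iff it is killed by every
   R-balanced biadditive map into an abelian group (universal property). *)
Definition balanced (R : pzRingType) (A : lmodType R^c) (B : lmodType R)
    (G : zmodType) (f : A -> B -> G) : Prop :=
  [/\ forall a a' b, f (a + a') b = f a b + f a' b,
      forall a b b', f a (b + b') = f a b + f a b' &
      forall (r : R) a b, f ((r : R^c) *: a) b = f a (r *: b)].

Definition tzero (R : pzRingType) (A : lmodType R^c) (B : lmodType R)
    (s : seq (A * B)) : Prop :=
  forall (G : zmodType) (f : A -> B -> G), balanced f ->
    \sum_(p <- s) f p.1 p.2 = 0.

Section Bigraded.
Variables (R : pzRingType) (X : complex R^c) (Y : complex R).

(* Bigraded representatives: F i j represents an element of X_i (x)_R Y_j.
   An element of degree n of the product total complex X \bar(x) Y is a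
   family F supported on i + j = n (components indexed by i, as in
   prod_i X_i (x) Y_{n-i}). *)
Definition bi := forall i j : int, seq (X i * Y j).

Definition badd (F G : bi) : bi := fun i j => F i j ++ G i j.
Definition bopp (F : bi) : bi := fun i j => map (fun p => (- p.1, p.2)) (F i j).
Definition bzero (F : bi) : Prop := forall i j, tzero (F i j).
Definition beq (F G : bi) : Prop := bzero (badd F (bopp G)).

Definition deg (n : int) (F : bi) : Prop :=
  forall i j, i + j != n -> tzero (F i j).
(* only finitely many nonzero components (coproduct) *)
Definition fin (F : bi) : Prop :=
  exists N : int, forall i j, N < `|i| -> tzero (F i j).
(* components in Y_j with j > m vanish: X (x) Y_{<= m} *)
Definition trunc (m : int) (F : bi) : Prop :=
  forall i j, m < j -> tzero (F i j).

Definition sgn (i : int) (M : zmodType) (x : M) : M :=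
  if odd (absz i) then - x else x.

Definition bd (F : bi) : bi := fun i j =>
  map (fun p => (cdiff X i p.1, p.2)) (F (i + 1) j)
  ++ map (fun p => (sgn i p.1, cdiff Y j p.2)) (F i (j + 1)).

Definition Ztr (n m : int) (F : bi) : Prop :=
  [/\ deg n F, fin F, trunc m F & bzero (bd F)].
Definition Btr (n m : int) (F : bi) : Prop :=
  exists G, [/\ deg (n + 1) G, fin G, trunc m G & beq F (bd G)].
End Bigraded.

(* Abelian groups presented as subquotients Z/B of a carrier with an
   addition and negation (x ~ y iff B (x - y)). *)
Record sq := SQ {
  sq_car : Type;
  sq_add : sq_car -> sq_car -> sq_car;
  sq_opp : sq_car -> sq_car;
  sq_Z : sq_car -> Prop;
  sq_B : sq_car -> Prop }.
Arguments sq_add : clear implicits.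
Arguments sq_opp : clear implicits.
Arguments sq_Z : clear implicits.
Arguments sq_B : clear implicits.

(* a function on representatives inducing a group homomorphism Z/B -> Z'/B' *)
Definition sq_hom (A B : sq) (f : sq_car A -> sq_car B) : Prop :=
  [/\ forall x, sq_Z A x -> sq_Z B (f x),
      forall x, sq_B A x -> sq_B B (f x) &
      forall x y, sq_Z A x -> sq_Z A y ->
        sq_B B (sq_add B (f (sq_add A x y)) (sq_opp B (sq_add B (f x) (f y))))].

Definition short_exact (A B C : sq) (f : sq_car A -> sq_car B)
    (g : sq_car B -> sq_car C) : Prop :=
  [/\ sq_hom f, sq_hom g,
      forall x, sq_Z A x -> sq_B B (f x) -> sq_B A x,
      forall y, sq_Z B y ->
        (sq_B C (g y) <-> exists x, sq_Z A x /\ sq_B B (sq_add B y (sq_opp B (f x)))) &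
      forall z, sq_Z C z -> exists y, sq_Z B y /\ sq_B C (sq_add C z (sq_opp C (g y)))].

Definition sq_trivial (A : sq) : Prop := forall x, sq_Z A x -> sq_B A x.

Section Groups.
Variables (R : pzRingType) (X : complex R^c) (Y : complex R).

(* H_n (X \check(x)_R Y), X \check(x) Y = (X \bar(x) Y)/(X (x) Y) *)
Definition Hcheck (n : int) : sq :=
  @SQ (bi X Y) (@badd _ X Y) (@bopp _ X Y)
    (fun F => deg n F /\ fin (bd F))
    (fun F => exists G C, [/\ deg (n + 1) G, deg n C, fin C &
                              beq F (badd (bd G) C)]).

Definition Hlim (k n : int) : sq :=
  @SQ (nat -> bi X Y)
    (fun F G i => badd (F i) (G i)) (fun F i => bopp (F i))
    (fun F => (forall i : nat, Ztr n (k - i%:Z) (F i)) /\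
              (forall i : nat, Btr n (k - i%:Z) (badd (F i) (bopp (F i.+1)))))
    (fun F => forall i : nat, Btr n (k - i%:Z) (F i)).

Definition Hlim1 (k n : int) : sq :=
  @SQ (nat -> bi X Y)
    (fun F G i => badd (F i) (G i)) (fun F i => bopp (F i))
    (fun F => forall i : nat, Ztr n (k - i%:Z) (F i))
    (fun F => exists G : nat -> bi X Y,
        (forall i : nat, Ztr n (k - i%:Z) (G i)) /\
        (forall i : nat, Btr n (k - i%:Z)
                     (badd (F i) (bopp (badd (G i) (bopp (G i.+1))))))).
End Groups.

(* Main.v *)
Require Import Defs.
From HB Require Import structures.
From mathcomp Require Import all_boot all_order all_algebra.
From mathcomp Require Import zify.
From Stdlib Require Import IndefiniteDescription.
Set Implicit Arguments. Unset Strict Implicit. Unset Printing Implicit Defensive.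
Import Order.TTheory GRing.Theory Num.Theory.
Local Open Scope ring_scope.

Section Main.
Variables (R : pzRingType) (X : complex R^c) (Y : complex R).
Local Notation bi := (bi X Y).
Implicit Types (F G : bi).

Definition val (i j : int) (M : zmodType) (f : X i -> Y j -> M) (s : seq (X i * Y j)) : M :=
  \sum_(p <- s) f p.1 p.2.

Lemma val_nil i j (M : zmodType) (f : X i -> Y j -> M) : val f [::] = 0.
Proof. by rewrite /val big_nil. Qed.
Lemma val_cat i j (M : zmodType) (f : X i -> Y j -> M) s t : val f (s ++ t) = val f s + val f t.
Proof. by rewrite /val big_cat. Qed.

Section Bal.
Variables (i j : int) (M : zmodType) (f : X i -> Y j -> M).
Hypothesis bf : balanced f.
Lemma bal0r a : f a 0 = 0.
Proof. case: bf => _ H _. have h := H a 0 0; rewrite addr0 in h.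
by apply: (addrI (f a 0)); rewrite addr0 -h. Qed.
Lemma bal0l b : f 0 b = 0.
Proof. case: bf => H _ _. have h := H 0 0 b; rewrite addr0 in h.
by apply: (addrI (f 0 b)); rewrite addr0 -h. Qed.
Lemma balNl a b : f (- a) b = - f a b.
Proof. case: bf => H _ _. apply: (addrI (f a b)); by rewrite -H subrr addrN bal0l. Qed.
Lemma val_opp s : val f (map (fun p => (- p.1, p.2)) s) = - val f s.
Proof. rewrite /val big_map -sumrN; apply: eq_bigr => p _ /=. exact: balNl. Qed.
End Bal.

Lemma bal_dX i j (M : zmodType) (f : X i -> Y j -> M) : balanced f ->
  balanced (fun a b => f (cdiff X i a) b).
Proof.
case=> H1 H2 H3; split.
- by move=> a a' b; rewrite raddfD H1.
- by move=> a b b'; rewrite H2.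
- by move=> r a b; rewrite linearZ /= H3.
Qed.

Lemma sgnD i (Mo : zmodType) (a b : Mo) : sgn i (a + b) = sgn i a + sgn i b.
Proof. rewrite /sgn; case: ifP => // _; exact: opprD. Qed.

Lemma bal_dY i j (M : zmodType) (f : X i -> Y j -> M) : balanced f ->
  balanced (fun a b => f (sgn i a) (cdiff Y j b)).
Proof.
case=> H1 H2 H3; split.
- by move=> a a' b; rewrite sgnD H1.
- by move=> a b b'; rewrite raddfD H2.
- move=> r a b; rewrite linearZ /=.
  have -> : sgn i ((r : R^c) *: a) = (r : R^c) *: sgn i a.
    by rewrite /sgn; case: ifP => // _; rewrite scalerN.
  by rewrite H3.
Qed.

Lemma val_bd (F : bi) i j (M : zmodType) (f : X i -> Y j -> M) :
  val f (bd F i j) = val (fun a b => f (cdiff X i a) b) (F (i + 1) j)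
                   + val (fun a b => f (sgn i a) (cdiff Y j b)) (F i (j + 1)).
Proof. by rewrite /bd val_cat /val !big_map. Qed.


Definition bnil : bi := fun i j => [::].
Definition sem (F G : bi) := forall i j (M : zmodType) (f : X i -> Y j -> M),
  balanced f -> val f (F i j) = val f (G i j).

Lemma tzeroP i j (s : seq (X i * Y j)) :
  tzero s <-> forall (M : zmodType) (f : X i -> Y j -> M), balanced f -> val f s = 0.
Proof. by []. Qed.

Lemma sem_refl F : sem F F. Proof. by []. Qed.
Lemma sem_sym F G : sem F G -> sem G F. Proof. by move=> H i j M f bf; rewrite H. Qed.
Lemma sem_trans F G H : sem F G -> sem G H -> sem F H.
Proof. by move=> H1 H2 i j M f bf; rewrite H1 // H2. Qed.

Lemma val_badd (F G : bi) i j (M : zmodType) (f : X i -> Y j -> M) :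
  val f (badd F G i j) = val f (F i j) + val f (G i j).
Proof. exact: val_cat. Qed.
Lemma val_bopp (F : bi) i j (M : zmodType) (f : X i -> Y j -> M) : balanced f ->
  val f (bopp F i j) = - val f (F i j).
Proof. by move=> bf; rewrite /bopp (val_opp bf). Qed.
Lemma val_bnil i j (M : zmodType) (f : X i -> Y j -> M) : val f (bnil i j) = 0.
Proof. exact: val_nil. Qed.

Lemma sem_add F F' G G' : sem F F' -> sem G G' -> sem (badd F G) (badd F' G').
Proof. by move=> H1 H2 i j M f bf; rewrite !val_badd H1 // H2. Qed.
Lemma sem_opp F F' : sem F F' -> sem (bopp F) (bopp F').
Proof. by move=> H1 i j M f bf; rewrite !val_bopp // H1. Qed.
Lemma sem_bd F F' : sem F F' -> sem (bd F) (bd F').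
Proof.
by move=> H i j M f bf; rewrite !val_bd (H _ _ _ _ (bal_dX bf)) (H _ _ _ _ (bal_dY bf)).
Qed.

Lemma beqP F G : beq F G <-> sem F G.
Proof.
split=> H i j M f bf.
- apply/eqP; rewrite -subr_eq0 -(val_bopp G bf) -val_badd. by apply/eqP; apply: H.
- by change (val f (badd F (bopp G) i j) = 0); rewrite val_badd val_bopp // H // subrr.
Qed.
Lemma bzeroP F : bzero F <-> sem F bnil.
Proof.
split=> H i j M f bf; first by rewrite val_bnil; apply: H.
by change (val f (F i j) = 0); rewrite (H _ _ _ _ bf) val_bnil.
Qed.

Lemma tzI i j (s : seq (X i * Y j)) :
  (forall (M : zmodType) (f : X i -> Y j -> M), balanced f -> val f s = 0) -> tzero s.
Proof. by []. Qed.

Lemma tzE i j (s : seq (X i * Y j)) (M : zmodType) (f : X i -> Y j -> M) :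
  tzero s -> balanced f -> val f s = 0.
Proof. by move=> H; apply: H. Qed.

Ltac tzi := let M := fresh "M" in let f := fresh "f" in let bf := fresh "bf" in
  apply: tzI => M f bf.

Lemma tz_sem F G i j : sem F G -> tzero (F i j) -> tzero (G i j).
Proof. by move=> H Hz; tzi; rewrite -H //; apply: Hz. Qed.
Lemma tz_nil i j : tzero (bnil i j). Proof. by tzi; rewrite val_bnil. Qed.
Lemma tz_add F G i j : tzero (F i j) -> tzero (G i j) -> tzero (badd F G i j).
Proof. by move=> H1 H2; tzi; rewrite val_badd (tzE H1 bf) (tzE H2 bf) addr0. Qed.
Lemma tz_opp F i j : tzero (F i j) -> tzero (bopp F i j).
Proof. by move=> H1; tzi; rewrite val_bopp // (tzE H1 bf) oppr0. Qed.
Lemma tz_bd F i j : tzero (F (i + 1) j) -> tzero (F i (j + 1)) -> tzero (bd F i j).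
Proof. by move=> H1 H2; tzi; rewrite val_bd (tzE H1 (bal_dX bf)) (tzE H2 (bal_dY bf)) addr0. Qed.

Lemma deg_sem d F G : sem F G -> deg d F -> deg d G.
Proof. by move=> H D i j h; apply: tz_sem H (D i j h). Qed.
Lemma deg_nil d : deg d bnil. Proof. by move=> i j _; apply: tz_nil. Qed.
Lemma deg_add d F G : deg d F -> deg d G -> deg d (badd F G).
Proof. by move=> D1 D2 i j h; apply: tz_add; [apply: D1 | apply: D2]. Qed.
Lemma deg_opp d F : deg d F -> deg d (bopp F).
Proof. by move=> D1 i j h; apply: tz_opp; apply: D1. Qed.
Lemma deg_bd d F : deg (d + 1) F -> deg d (bd F).
Proof. move=> D i j h; apply: tz_bd; apply: D; lia. Qed.

Lemma fin_sem F G : sem F G -> fin F -> fin G.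
Proof. by move=> H [N D]; exists N => i j h; apply: tz_sem H (D i j h). Qed.
Lemma fin_nil : fin bnil. Proof. by exists 0 => i j _; apply: tz_nil. Qed.
Lemma fin_add F G : fin F -> fin G -> fin (badd F G).
Proof.
move=> [N1 D1] [N2 D2]; exists (`|N1| + `|N2|) => i j h.
by apply: tz_add; [apply: D1 | apply: D2]; lia.
Qed.
Lemma fin_opp F : fin F -> fin (bopp F).
Proof. by move=> [N D]; exists N => i j h; apply: tz_opp; apply: D. Qed.
Lemma fin_bd F : fin F -> fin (bd F).
Proof. move=> [N D]; exists (`|N| + 1) => i j h; apply: tz_bd; apply: D; lia. Qed.

Lemma trunc_sem m F G : sem F G -> trunc m F -> trunc m G.
Proof. by move=> H D i j h; apply: tz_sem H (D i j h). Qed.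
Lemma trunc_nil m : trunc m bnil. Proof. by move=> i j _; apply: tz_nil. Qed.
Lemma trunc_add m F G : trunc m F -> trunc m G -> trunc m (badd F G).
Proof. by move=> D1 D2 i j h; apply: tz_add; [apply: D1 | apply: D2]. Qed.
Lemma trunc_opp m F : trunc m F -> trunc m (bopp F).
Proof. by move=> D1 i j h; apply: tz_opp; apply: D1. Qed.
Lemma trunc_bd m F : trunc m F -> trunc m (bd F).
Proof. move=> D i j h; apply: tz_bd; apply: D; lia. Qed.
Lemma trunc_le m m' F : m <= m' -> trunc m F -> trunc m' F.
Proof. move=> le D i j h; apply: D; lia. Qed.


Lemma absz_spec (x : int) : (Posz (absz x) = x /\ 0 <= x) \/ (Posz (absz x) = - x /\ x < 0).
Proof. case: (lerP 0 x) => h; [left|right]; split => //.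
  by rewrite gez0_abs. by rewrite ltz0_abs. Qed.

Lemma sgnS i (Mo : zmodType) (x : Mo) : sgn (i + 1) x = - sgn i x.
Proof.
have : absz (i + 1) = (absz i).+1 \/ absz i = (absz (i + 1)).+1.
  have := absz_spec i; have := absz_spec (i + 1); lia.
rewrite /sgn; case=> ->; rewrite /=; case: (odd _) => //=; by rewrite opprK.
Qed.

Lemma val_eq0 i j (M : zmodType) (f : X i -> Y j -> M) s :
  (forall a b, f a b = 0) -> val f s = 0.
Proof. by move=> H; rewrite /val big1 // => p _; rewrite H. Qed.

Lemma val_addf i j (M : zmodType) (f g : X i -> Y j -> M) s :
  val f s + val g s = val (fun a b => f a b + g a b) s.
Proof. by rewrite /val -big_split. Qed.

Lemma sgn_lin i (x : X (i + 1)) : cdiff X i (sgn i x) = sgn i (cdiff X i x).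
Proof. by rewrite /sgn; case: ifP => // _; rewrite raddfN. Qed.

Lemma bd_bd F : sem (bd (bd F)) bnil.
Proof.
move=> i j M f bf; rewrite val_bnil !val_bd.
rewrite val_eq0; last by move=> a b; rewrite cdiff2 (bal0l bf).
rewrite [X in _ + (_ + X)]val_eq0; last by move=> a b; rewrite cdiff2 (bal0r bf).
rewrite add0r addr0 val_addf val_eq0 // => a b.
by rewrite sgnS raddfN /= (balNl bf) sgn_lin addNr.
Qed.



Definition tr (m : int) F : bi := fun i j => if j <= m then F i j else [::].
Definition slab (m : int) F : bi := fun i j => if j == m then F i j else [::].
Definition high (m : int) F : bi := fun i j => if m < j then F i j else [::].

Lemma val_tr m F i j (M : zmodType) (f : X i -> Y j -> M) :
  val f (tr m F i j) = if j <= m then val f (F i j) else 0.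
Proof. by rewrite /tr; case: ifP => _ //; rewrite val_nil. Qed.
Lemma val_slab m F i j (M : zmodType) (f : X i -> Y j -> M) :
  val f (slab m F i j) = if j == m then val f (F i j) else 0.
Proof. by rewrite /slab; case: ifP => _ //; rewrite val_nil. Qed.
Lemma val_high m F i j (M : zmodType) (f : X i -> Y j -> M) :
  val f (high m F i j) = if m < j then val f (F i j) else 0.
Proof. by rewrite /high; case: ifP => _ //; rewrite val_nil. Qed.

Lemma tr_sem m F G : sem F G -> sem (tr m F) (tr m G).
Proof. by move=> H i j M f bf; rewrite !val_tr H. Qed.
Lemma tr_add m F G : sem (tr m (badd F G)) (badd (tr m F) (tr m G)).
Proof. by move=> i j M f bf; rewrite !val_badd !val_tr val_badd; case: ifP; rewrite ?addr0. Qed.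
Lemma tr_opp m F : sem (tr m (bopp F)) (bopp (tr m F)).
Proof. by move=> i j M f bf; rewrite !val_bopp // !val_tr val_bopp //; case: ifP; rewrite ?oppr0. Qed.
Lemma trunc_tr m F : trunc m (tr m F).
Proof. move=> i j h; apply: tzI => M f bf; rewrite val_tr ifF //; lia. Qed.
Lemma deg_tr d m F : deg d F -> deg d (tr m F).
Proof. move=> D i j h; apply: tzI => M f bf; rewrite val_tr; case: ifP => // _; exact: (tzE (D i j h)). Qed.
Lemma fin_tr m F : fin F -> fin (tr m F).
Proof. move=> [N D]; exists N => i j h; apply: tzI => M f bf; rewrite val_tr; case: ifP => // _; exact: (tzE (D i j h)). Qed.
Lemma tr_trunc m F : trunc m F -> sem (tr m F) F.
Proof.
move=> D i j M f bf; rewrite val_tr; case: ifP => // h.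
by rewrite (tzE (D i j _) bf) //; lia.
Qed.
Lemma tr_split m F : sem F (badd (tr m F) (high m F)).
Proof.
move=> i j M f bf; rewrite val_badd val_tr val_high.
by case: (lerP j m) => h; rewrite ?addr0 ?add0r.
Qed.

Lemma trunc_slab m F : trunc m (slab m F).
Proof. move=> i j h; apply: tzI => M f bf; rewrite val_slab ifF //; lia. Qed.
Lemma deg_slab d m F : deg d F -> deg d (slab m F).
Proof. move=> D i j h; apply: tzI => M f bf; rewrite val_slab; case: ifP => // _; exact: (tzE (D i j h)). Qed.
Lemma deg_high d m F : deg d F -> deg d (high m F).
Proof. move=> D i j h; apply: tzI => M f bf; rewrite val_high; case: ifP => // _; exact: (tzE (D i j h)). Qed.

Lemma fin_col d m F : deg d F -> (forall i j, j != m -> tzero (F i j)) -> fin F.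
Proof.
move=> D C; exists `|d - m| => i j h.
case: (eqVneq j m) => [e|]; last exact: C.
apply: D; lia.
Qed.
Lemma fin_slab d m F : deg d F -> fin (slab m F).
Proof.
move=> D; apply: (fin_col (m := m) (deg_slab m D)) => i j h.
by apply: tzI => M f bf; rewrite val_slab ifF //; apply/negbTE.
Qed.

Lemma slab_diff m F : sem (badd (tr m F) (bopp (tr (m - 1) F))) (slab m F).
Proof.
move=> i j M f bf; rewrite val_badd val_bopp // !val_tr val_slab.
case: (ltgtP j m) => h.
- by case: ifP => h2; [rewrite subrr | lia].
- by case: ifP => h2; [lia | rewrite subr0].
- by case: ifP => h2; [lia | rewrite subr0].
Qed.

Definition Etr m F := badd (tr m (bd F)) (bopp (bd (tr m F))).
Lemma Etr_col m F i j : j != m -> tzero (Etr m F i j).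
Proof.
move=> h; apply: tzI => M f bf.
rewrite val_badd val_bopp // val_tr !val_bd !val_tr.
case: (ltgtP j m) => h'.
- by case: ifP => h2; [rewrite subrr | lia].
- by case: ifP => h2; [lia | rewrite addr0 subrr].
- by exfalso; move/eqP: h; apply.
Qed.
Lemma deg_Etr d m F : deg (d + 1) F -> deg d (Etr m F).
Proof. move=> D; apply: deg_add; [apply: deg_tr; exact: deg_bd | apply: deg_opp; apply: deg_bd; exact: deg_tr]. Qed.
Lemma fin_Etr d m F : deg (d + 1) F -> fin (Etr m F).
Proof. move=> D; exact: (fin_col (deg_Etr m D) (@Etr_col m F)). Qed.
Lemma trunc_Etr m F : trunc m (Etr m F).
Proof. apply: trunc_add; [exact: trunc_tr | apply: trunc_opp; apply: trunc_bd; exact: trunc_tr]. Qed.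
Lemma Etr_eq m F : sem (tr m (bd F)) (badd (Etr m F) (bd (tr m F))).
Proof. move=> i j M f bf; by rewrite /Etr !val_badd val_bopp // subrK. Qed.

Section Bounded.
Variable k : int.
Hypothesis hk : forall i : int, k < i -> forall y : Y i, y = 0.

Lemma tz_high F i j : k < j -> tzero (F i j).
Proof. move=> h; apply: tzI => M f bf; apply: val_eq0 => a b; by rewrite (hk h b) (bal0r bf). Qed.

Lemma truncK F : trunc k F.
Proof. by move=> i j h; apply: tz_high. Qed.

Lemma fin_high d m F : deg d F -> fin (high m F).
Proof.
move=> D; exists (`|d - k| + `|d - m|) => i j h.
apply: tzI => M f bf; rewrite val_high; case: ifP => // hm.
case: (lerP j k) => hj; last exact: (tzE (tz_high F hj) bf).
apply: (tzE (D i j _) bf); lia.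
Qed.


Definition psum (h : nat -> bi) (N : nat) : bi :=
  fun i j => \big[cat/[::]]_(0 <= l < N) h l i j.
Definition Nb (j : int) : nat := if j <= k then absz (k - j + 1) else 0%N.
Definition bsum (h : nat -> bi) : bi := fun i j => psum h (Nb j) i j.
Definition shift (h : nat -> bi) (s : nat) : nat -> bi := fun l => h (l + s)%N.
Definition TF (h : nat -> bi) := forall l : nat, trunc (k - l%:Z) (h l).

Lemma val_psum h N i j (M : zmodType) (f : X i -> Y j -> M) :
  val f (psum h N i j) = \sum_(0 <= l < N) val f (h l i j).
Proof. exact: (big_morph (val f) (val_cat f) (val_nil f)). Qed.

Lemma Nb_le j (l : nat) : (Nb j <= l)%N = (k - l%:Z < j).
Proof.
rewrite /Nb; case: ifP => hj.
  by apply/idP/idP => h; have := absz_spec (k - j + 1); lia.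
by apply/esym; lia.
Qed.

Lemma Nb_S j : (Nb (j + 1) <= Nb j)%N.
Proof. rewrite Nb_le; have := Nb_le j (Nb j); rewrite leqnn => /esym h; lia. Qed.

Lemma psum_stab h i j (M : zmodType) (f : X i -> Y j -> M) (L N : nat) :
  (forall l, (L <= l)%N -> tzero (h l i j)) -> balanced f -> (L <= N)%N ->
  val f (psum h N i j) = val f (psum h L i j).
Proof.
move=> Hz bf LN; rewrite !val_psum (big_cat_nat (leq0n L) LN) /=.
rewrite [X in _ + X]big1_seq ?addr0 // => l; rewrite mem_index_iota => /andP [_ /andP [hl _]].
exact: (tzE (Hz l hl) bf).
Qed.

Lemma TF_tz h i j (l : nat) : TF h -> (Nb j <= l)%N -> tzero (h l i j).
Proof. by move=> T; rewrite Nb_le => hl; apply: T. Qed.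

Lemma bsum_stab h i j (M : zmodType) (f : X i -> Y j -> M) (N : nat) :
  TF h -> balanced f -> (Nb j <= N)%N -> val f (psum h N i j) = val f (bsum h i j).
Proof. move=> T bf le; apply: psum_stab => // l hl; exact: TF_tz. Qed.

Lemma tz_psum h N i j : (forall l, tzero (h l i j)) -> tzero (psum h N i j).
Proof.
move=> Hz; apply: tzI => M f bf; rewrite val_psum big1 // => l _; exact: (tzE (Hz l) bf).
Qed.

Lemma bsum_add h h' : sem (bsum (fun l => badd (h l) (h' l))) (badd (bsum h) (bsum h')).
Proof.
move=> i j M f bf; rewrite val_badd /bsum !val_psum -big_split /=.
by apply: eq_bigr => l _; rewrite val_badd.
Qed.
Lemma bsum_opp h : sem (bsum (fun l => bopp (h l))) (bopp (bsum h)).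
Proof.
move=> i j M f bf; rewrite val_bopp // /bsum !val_psum -sumrN /=.
by apply: eq_bigr => l _; rewrite val_bopp.
Qed.
Lemma bsum_sem h h' : (forall l, sem (h l) (h' l)) -> sem (bsum h) (bsum h').
Proof.
move=> H i j M f bf; rewrite /bsum !val_psum; apply: eq_bigr => l _; exact: H.
Qed.
Lemma bsum_nil h : (forall l, sem (h l) bnil) -> sem (bsum h) bnil.
Proof.
move=> H i j M f bf; rewrite val_bnil /bsum val_psum big1 // => l _.
by rewrite H // val_bnil.
Qed.

Lemma bsum_bd h : TF h -> sem (bd (bsum h)) (bsum (fun l => bd (h l))).
Proof.
move=> T i j M f bf; rewrite val_bd /bsum.
rewrite -(@psum_stab h i (j + 1) _ _ (Nb (j + 1)) (Nb j)); last exact: Nb_S.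
- rewrite !val_psum -big_split /=; apply: eq_bigr => l _; by rewrite val_bd.
- move=> l hl; exact: TF_tz.
- exact: bal_dY.
Qed.

Lemma deg_bsum d h : (forall l, deg d (h l)) -> deg d (bsum h).
Proof. move=> D i j hd; apply: tz_psum => l; exact: D. Qed.
Lemma deg_psum d h N : (forall l, deg d (h l)) -> deg d (psum h N).
Proof. move=> D i j hd; apply: tz_psum => l; exact: D. Qed.

Lemma TF_shift h s : TF h -> TF (shift h s).
Proof. move=> T l i j hl; apply: T; lia. Qed.

Lemma trunc_bsum_shift h (s : nat) : TF h -> trunc (k - s%:Z) (bsum (shift h s)).
Proof. move=> T i j hj; apply: tz_psum => l; apply: T; lia. Qed.

Lemma bsum_tele u : TF u -> sem (bsum (fun l => badd (u l) (bopp (u l.+1)))) (u 0%N).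
Proof.
move=> T i j M f bf; rewrite /bsum val_psum.
rewrite (telescope_sumr_eq (fun l => - val f (u l i j))) //; last first.
  by move=> l _; rewrite val_badd val_bopp // opprK addrC.
by rewrite opprK (tzE (@TF_tz u i j (Nb j) T (leqnn _)) bf) oppr0 add0r.
Qed.

Lemma bsum_split h (s : nat) : TF h ->
  sem (tr (k - s%:Z) (bsum h)) (badd (tr (k - s%:Z) (psum h s)) (bsum (shift h s))).
Proof.
move=> T i j M f bf; rewrite val_badd !val_tr; case: ifP => hj.
- have hs : (s <= Nb j)%N by rewrite /Nb ifT; [have := absz_spec (k - j + 1); lia | lia].
  rewrite /bsum (val_psum h (Nb j)) (big_cat_nat (leq0n s) hs) /= -val_psum.
  congr (_ + _).
  rewrite -{1}(add0n s) big_addn.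
  rewrite (@psum_stab (shift h s) i j _ _ (Nb j - s) (Nb j)); last exact: leq_subr.
  + by rewrite val_psum.
  + move=> l hl; apply: (@TF_tz h i j (l + s)%N) => //; lia.
  + exact: bf.
- rewrite add0r /bsum val_psum big1 // => l _; apply: (tzE _ bf).
  apply: T; lia.
Qed.

Lemma fin_psum h N : (forall l, fin (h l)) -> fin (psum h N).
Proof.
move=> Fh; elim: N => [|N IH].
  by apply: (fin_sem _ fin_nil) => i j M f bf; rewrite val_psum big_geq // val_bnil.
apply: (fin_sem _ (fin_add IH (Fh N))) => i j M f bf.
by rewrite val_badd !val_psum big_nat_recr.
Qed.


Lemma add3ACA (Mo : zmodType) (a b c a' b' c' : Mo) :
  (a + b + c) + (a' + b' + c') = (a + a') + (b + b') + (c + c').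
Proof. by rewrite addrACA (addrACA a). Qed.

Lemma alg_w (Mo : zmodType) (T P S E B C : Mo) : T = P + S -> T = E + B + C -> E + C - P = S - B.
Proof. move=> h1 h2. have -> : S = T - P by rewrite h1 addrC addKr.
by rewrite h2 [RHS]addrAC [E + B + C]addrAC addrK. Qed.
Lemma alg_b (Mo : zmodType) (z S S' D B B' : Mo) : S - S' = z -> B - B' = D ->
  D = z - ((S - B) - (S' - B')).
Proof. move=> <- <-. rewrite opprB opprD opprK.
by rewrite -[S' - B' + _]addrA subrKA addrCA addNKr addrC. Qed.

Lemma alg_x (Mo : zmodType) (T T' S H H' : Mo) : T - T' = S -> (T - H) - (T' - H') = S + (- H + H').
Proof. move=> <-. by rewrite opprB [H' - T']addrC addrACA. Qed.

Definition BC (d : int) F := exists G C,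
  [/\ deg (d + 1) G, deg d C, fin C & beq F (badd (bd G) C)].

Lemma BC_sem d F F' : sem F F' -> BC d F -> BC d F'.
Proof.
move=> H [G [C [D1 D2 D3 /beqP E]]]; exists G, C; split => //.
by apply/beqP; apply: sem_trans (sem_sym H) E.
Qed.
Lemma BC_fin d F : deg d F -> fin F -> BC d F.
Proof.
move=> D Fi; exists bnil, F; split => //; first exact: deg_nil.
by apply/beqP => i j M f bf; rewrite val_badd val_bd !val_bnil !add0r.
Qed.
Lemma BC_nil d : BC d bnil.
Proof. apply: BC_fin; [exact: deg_nil | exact: fin_nil]. Qed.
Lemma BC_add d F F' : BC d F -> BC d F' -> BC d (badd F F').
Proof.
move=> [G [C [D1 D2 D3 /beqP E]]] [G' [C' [D1' D2' D3' /beqP E']]].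
exists (badd G G'), (badd C C'); split.
- exact: deg_add.
- exact: deg_add.
- exact: fin_add.
apply/beqP => i j M f bf; rewrite !val_badd E // E' // !val_badd !val_bd !val_badd.
by rewrite add3ACA.
Qed.

Lemma Btr_sem n m F F' : sem F F' -> Btr n m F -> Btr n m F'.
Proof.
move=> H [G [D1 D2 D3 /beqP E]]; exists G; split => //.
by apply/beqP; apply: sem_trans (sem_sym H) E.
Qed.
Lemma Btr_bd n m G : deg (n + 1) G -> fin G -> trunc m G -> Btr n m (bd G).
Proof. by move=> D1 D2 D3; exists G; split => //; apply/beqP; apply: sem_refl. Qed.
Lemma Btr_nil n m : Btr n m bnil.
Proof.
apply: (Btr_sem _ (Btr_bd (@deg_nil (n + 1)) fin_nil (@trunc_nil m))).
by move=> i j M f bf; rewrite val_bd !val_bnil addr0.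
Qed.
Lemma bd_add F G : sem (bd (badd F G)) (badd (bd F) (bd G)).
Proof.
move=> i j M f bf; rewrite !val_badd !val_bd !val_badd.
by rewrite addrACA.
Qed.
Lemma bd_opp F : sem (bd (bopp F)) (bopp (bd F)).
Proof.
move=> i j M f bf; rewrite !val_bopp // !val_bd !val_bopp ?opprD //.
exact: bal_dY. exact: bal_dX.
Qed.
Lemma Btr_add n m F F' : Btr n m F -> Btr n m F' -> Btr n m (badd F F').
Proof.
move=> [G [D1 D2 D3 /beqP E]] [G' [D1' D2' D3' /beqP E']].
apply: (Btr_sem _ (Btr_bd (deg_add D1 D1') (fin_add D2 D2') (trunc_add D3 D3'))).
exact: (sem_sym (sem_trans (sem_add E E') (sem_sym (bd_add G G')))).
Qed.
Lemma Btr_opp n m F : Btr n m F -> Btr n m (bopp F).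
Proof.
move=> [G [D1 D2 D3 /beqP E]].
apply: (Btr_sem _ (Btr_bd (deg_opp D1) (fin_opp D2) (trunc_opp D3))).
exact: (sem_sym (sem_trans (sem_opp E) (sem_sym (bd_opp G)))).
Qed.


Section Proofs.
Variable n : int.

Lemma Ztr_TF d (z : nat -> bi) : (forall i : nat, Ztr d (k - i%:Z) (z i)) -> TF z.
Proof. by move=> H l; case: (H l). Qed.

Lemma f_Z (z : nat -> bi) : (forall i : nat, Ztr (n + 1) (k - i%:Z) (z i)) ->
  deg (n + 1) (bsum z) /\ fin (bd (bsum z)).
Proof.
move=> H; have T := Ztr_TF H; split.
  by apply: deg_bsum => l; case: (H l).
apply: (fin_sem _ fin_nil); apply: sem_sym; apply: sem_trans (bsum_bd T) _.
by apply: bsum_nil => l; case: (H l) => _ _ _ /bzeroP.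
Qed.

Lemma f_B (z w h : nat -> bi) :
  (forall i : nat, Ztr (n + 1) (k - i%:Z) (w i)) ->
  (forall i : nat, [/\ deg (n + 1 + 1) (h i), fin (h i), trunc (k - i%:Z) (h i) &
       beq (badd (z i) (bopp (badd (w i) (bopp (w i.+1))))) (bd (h i))]) ->
  BC (n + 1) (bsum z).
Proof.
move=> Hw Hh.
have Tw := Ztr_TF Hw.
have Th : TF h by move=> l; case: (Hh l).
pose u l := badd (badd (w l) (bopp (w l.+1))) (bd (h l)).
have Ezu : forall l, sem (z l) (u l).
  move=> l; case: (Hh l) => _ _ _ /beqP E i j M f bf.
  have := E i j M f bf; rewrite /u !val_badd !val_bopp // val_badd val_bopp //.
  by move=> <-; rewrite addrC subrK.
have Tu : TF u.
  move=> l; apply: trunc_add; last by apply: trunc_bd; apply: Th.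
  apply: trunc_add; first exact: Tw.
  by apply: trunc_opp; apply: (trunc_le _ (Tw l.+1)); lia.
exists (bsum h), (w 0%N); split.
- by apply: deg_bsum => l; case: (Hh l).
- by case: (Hw 0%N).
- by case: (Hw 0%N).
apply/beqP; apply: sem_trans (bsum_sem Ezu) _.
apply: sem_trans (bsum_add _ _) _.
apply: sem_trans (sem_add (bsum_tele Tw) (sem_sym (bsum_bd Th))) _.
by move=> i j M f bf; rewrite !val_badd addrC.
Qed.

Lemma f_add (z z' : nat -> bi) :
  BC (n + 1) (badd (bsum (fun l => badd (z l) (z' l))) (bopp (badd (bsum z) (bsum z')))).
Proof.
apply: (BC_sem _ (BC_nil _)) => i j M f bf.
by rewrite val_bnil val_badd val_bopp // (bsum_add z z') // subrr.
Qed.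


Definition gm F : nat -> bi := fun i => bd (tr (k - i%:Z) F).

Lemma trS (i : nat) F : tr (k - (i.+1)%:Z) F = tr (k - i%:Z - 1) F.
Proof. by congr tr; rewrite -addn1 PoszD opprD addrA. Qed.

Lemma g_Z F : deg (n + 1) F -> fin (bd F) ->
  (forall i : nat, Ztr n (k - i%:Z) (gm F i)) /\
  (forall i : nat, Btr n (k - i%:Z) (badd (gm F i) (bopp (gm F i.+1)))).
Proof.
move=> D Fb; split => i.
- split.
  + by apply: deg_bd; apply: deg_tr.
  + have E : sem (badd (bd F) (bopp (bd (high (k - i%:Z) F)))) (gm F i).
      have S := sem_bd (tr_split (k - i%:Z) F).
      move=> a b M f bf; rewrite val_badd val_bopp // (S a b M f bf) (bd_add _ _ bf).
      by rewrite val_badd addrK.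
    apply: (fin_sem E); apply: fin_add => //; apply: fin_opp; apply: fin_bd.
    exact: (fin_high _ D).
  + by apply: trunc_bd; apply: trunc_tr.
  + by apply/bzeroP; apply: bd_bd.
- apply: (Btr_sem _ (Btr_bd (deg_slab (k - i%:Z) D) (fin_slab (k - i%:Z) D)
                         (@trunc_slab (k - i%:Z) F))).
  apply: sem_sym; rewrite /gm trS.
  move=> a b M f bf.
  rewrite (sem_add (sem_refl _) (sem_sym (bd_opp _)) bf) -(bd_add _ _ bf).
  exact: (sem_bd (slab_diff _ _) bf).
Qed.


Lemma gm_add F F' i : sem (gm (badd F F') i) (badd (gm F i) (gm F' i)).
Proof. move=> a b M f bf; by rewrite (sem_bd (tr_add _ _ _) bf) (bd_add _ _ bf). Qed.

Lemma gm_sem F F' i : sem F F' -> sem (gm F i) (gm F' i).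
Proof. by move=> E; apply: sem_bd; apply: tr_sem. Qed.

Lemma g_B F G C : deg (n + 1 + 1) G -> deg (n + 1) C -> fin C ->
  beq F (badd (bd G) C) -> forall i : nat, Btr n (k - i%:Z) (gm F i).
Proof.
move=> DG DC FC /beqP E i; rewrite /gm; move: (k - i%:Z) => m.
apply: (Btr_sem _ (Btr_bd (deg_add (deg_Etr m DG) (deg_tr m DC))
   (fin_add (fin_Etr m DG) (fin_tr m FC)) (trunc_add (@trunc_Etr m G) (@trunc_tr m C)))).
move=> a b M f bf.
rewrite (sem_bd (tr_sem m E) bf) (sem_bd (tr_add _ _ _) bf) (bd_add _ _ bf) val_badd.
rewrite (bd_add _ _ bf) val_badd (sem_bd (Etr_eq m G) bf) (bd_add _ _ bf) val_badd.
by rewrite (bd_bd _ bf) val_bnil addr0.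
Qed.

Lemma g_add F F' (i : nat) :
  Btr n (k - i%:Z) (badd (gm (badd F F') i) (bopp (badd (gm F i) (gm F' i)))).
Proof.
apply: (Btr_sem _ (@Btr_nil n (k - i%:Z))) => a b M f bf.
by rewrite val_bnil val_badd val_bopp // (gm_add _ _ _ bf) subrr.
Qed.

Lemma f_inj (z : nat -> bi) : (forall i : nat, Ztr (n + 1) (k - i%:Z) (z i)) ->
  BC (n + 1) (bsum z) ->
  exists w : nat -> bi, (forall i : nat, Ztr (n + 1) (k - i%:Z) (w i)) /\
    (forall i : nat, Btr (n + 1) (k - i%:Z) (badd (z i) (bopp (badd (w i) (bopp (w i.+1)))))).
Proof.
move=> Hz [G [C [DG DC FC /beqP E]]].
have T := Ztr_TF Hz.
pose w i := badd (bsum (shift z i)) (bopp (bd (tr (k - i%:Z) G))).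
exists w; split => i.
- split.
  + apply: deg_add; first by apply: deg_bsum => l; case: (Hz (l + i)%N).
    by apply: deg_opp; apply: deg_bd; apply: deg_tr.
  + apply: (@fin_sem (badd (badd (Etr (k - i%:Z) G) (tr (k - i%:Z) C))
                        (bopp (tr (k - i%:Z) (psum z i))))).
      move=> a b M f bf; rewrite /w !val_badd !val_bopp //.
      apply: alg_w.
        by rewrite -val_badd -(bsum_split i T bf).
      by rewrite (tr_sem _ E bf) (tr_add _ _ _ bf) val_badd subrK.
    apply: fin_add; last by apply: fin_opp; apply: fin_tr; apply: fin_psum => l; case: (Hz l).
    by apply: fin_add; [apply: (fin_Etr _ DG) | apply: fin_tr].
  + apply: trunc_add; first exact: trunc_bsum_shift.
    by apply: trunc_opp; apply: trunc_bd; apply: trunc_tr.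
  + apply/bzeroP => a b M f bf.
    rewrite (bd_add _ _ bf) val_badd (bd_opp _ bf) val_bopp // (bd_bd _ bf) val_bnil.
    rewrite oppr0 addr0 (bsum_bd (TF_shift i T) bf) (bsum_nil _ bf) ?val_bnil // => l.
    by case: (Hz (l + i)%N) => _ _ _ /bzeroP.
- apply: (Btr_sem _ (Btr_bd (deg_slab (k - i%:Z) DG) (fin_slab (k - i%:Z) DG)
                         (@trunc_slab (k - i%:Z) G))).
  have Hs : forall l, sem (shift z i l.+1) (shift z i.+1 l).
    by move=> l; rewrite /shift addSn addnS; apply: sem_refl.
  move=> a b M f bf; rewrite /w; do 4 rewrite ?val_badd ?(val_bopp _ bf).
  apply: alg_b.
    have Te := bsum_tele (TF_shift i T) bf.
    rewrite -(bsum_sem Hs bf) -(val_bopp _ bf) -(bsum_opp _ bf) -val_badd -(bsum_add _ _ bf).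
    exact: Te.
  rewrite trS -(val_bopp _ bf) -(bd_opp _ bf) -val_badd -(bd_add _ _ bf).
  exact: (sem_bd (slab_diff _ _) bf).
Qed.

Lemma choose_Btr (P : nat -> bi -> Prop) :
  (forall i : nat, exists G, P i G) -> exists h : nat -> bi, forall i, P i (h i).
Proof.
move=> H; exists (fun i => proj1_sig (constructive_indefinite_description _ (H i))).
by move=> i; exact: (proj2_sig (constructive_indefinite_description _ (H i))).
Qed.

Lemma mid_to y : deg (n + 1) y -> (forall i : nat, Btr n (k - i%:Z) (gm y i)) ->
  exists x : nat -> bi, (forall i : nat, Ztr (n + 1) (k - i%:Z) (x i)) /\
    BC (n + 1) (badd y (bopp (bsum x))).
Proof.
move=> D H; have [h Hh] := choose_Btr H.
pose u i := badd (tr (k - i%:Z) y) (bopp (h i)).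
have Tu : TF u.
  by move=> l; apply: trunc_add; [exact: trunc_tr | apply: trunc_opp; case: (Hh l)].
have bdu : forall i, sem (bd (u i)) bnil.
  move=> i a b M f bf; case: (Hh i) => _ _ _ /beqP E.
  rewrite /u (bd_add _ _ bf) val_badd (bd_opp _ bf) val_bopp // val_bnil.
  by rewrite -[val f (bd (tr _ y) a b)]/(val f (gm y i a b)) (E a b M f bf) subrr.
have Du : forall i, deg (n + 1) (u i).
  by move=> i; apply: deg_add; [exact: deg_tr | apply: deg_opp; case: (Hh i)].
exists (fun i => badd (u i) (bopp (u i.+1))); split => [i|].
- split.
  + by apply: deg_add; [exact: Du | apply: deg_opp; exact: Du].
  + apply: (@fin_sem (badd (slab (k - i%:Z) y) (badd (bopp (h i)) (h i.+1)))).
      move=> a b M f bf; rewrite /u; do 4 rewrite ?val_badd ?(val_bopp _ bf).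
      apply/esym; apply: alg_x.
      rewrite trS -(val_bopp _ bf) -val_badd; exact: (slab_diff _ _ bf).
    apply: fin_add; first exact: (fin_slab _ D).
    by apply: fin_add; [apply: fin_opp; case: (Hh i) | case: (Hh i.+1)].
  + apply: trunc_add; first exact: Tu.
    by apply: trunc_opp; apply: (trunc_le _ (Tu i.+1)); lia.
  + apply/bzeroP => a b M f bf.
    by rewrite (bd_add _ _ bf) val_badd (bd_opp _ bf) val_bopp // (bdu _ _ _ _ _ bf)
      (bdu _ _ _ _ _ bf) val_bnil subrr.
- case: (Hh 0%N) => D0 F0 _ _.
  apply: (BC_sem _ (BC_fin D0 F0)) => a b M f bf.
  rewrite val_badd val_bopp // (bsum_tele Tu bf) /u val_badd val_bopp //.
  rewrite (tr_trunc (trunc_le _ (truncK y)) bf); last by lia.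
  by rewrite opprB addrC subrK.
Qed.

Lemma gm_bsum x (i : nat) : (forall i : nat, Ztr (n + 1) (k - i%:Z) (x i)) ->
  Btr n (k - i%:Z) (gm (bsum x) i).
Proof.
move=> Hx; have T := Ztr_TF Hx.
apply: (Btr_sem _ (Btr_bd (deg_tr (k - i%:Z) (deg_psum i (fun l => match Hx l with And4 d _ _ _ => d end)))
   (fin_tr (k - i%:Z) (fin_psum i (fun l => match Hx l with And4 _ d _ _ => d end)))
   (@trunc_tr (k - i%:Z) _))).
move=> a b M f bf; rewrite /gm (sem_bd (bsum_split i T) bf) (bd_add _ _ bf) val_badd.
rewrite (bsum_bd (TF_shift i T) bf) (bsum_nil _ bf) ?val_bnil ?addr0 // => l.
by case: (Hx (l + i)%N) => _ _ _ /bzeroP.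
Qed.

Lemma mid_from y x : (forall i : nat, Ztr (n + 1) (k - i%:Z) (x i)) ->
  BC (n + 1) (badd y (bopp (bsum x))) -> forall i : nat, Btr n (k - i%:Z) (gm y i).
Proof.
move=> Hx [G [C [DG DC FC E]]] i.
apply: (Btr_sem _ (Btr_add (g_B DG DC FC E i) (gm_bsum i Hx))).
move=> a b M f bf; rewrite -(gm_add _ _ _ bf); apply: (gm_sem _ _ bf).
by move=> a' b' M' f' bf'; rewrite !val_badd val_bopp // subrK.
Qed.

Lemma surj z : (forall i : nat, Ztr n (k - i%:Z) (z i)) ->
  (forall i : nat, Btr n (k - i%:Z) (badd (z i) (bopp (z i.+1)))) ->
  exists y, (deg (n + 1) y /\ fin (bd y)) /\
    forall i : nat, Btr n (k - i%:Z) (badd (z i) (bopp (gm y i))).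
Proof.
move=> Hz H; have [h Hh] := choose_Btr H.
have Tz := Ztr_TF Hz.
have Th : TF h by move=> l; case: (Hh l).
have Eh : forall l, sem (bd (h l)) (badd (z l) (bopp (z l.+1))).
  by move=> l; case: (Hh l) => _ _ _ /beqP E; apply: sem_sym.
have Bz : sem (bd (bsum h)) (z 0%N).
  apply: sem_trans (bsum_bd Th) _; apply: sem_trans (bsum_sem Eh) _.
  exact: bsum_tele.
exists (bsum h); split.
  split; first by apply: deg_bsum => l; case: (Hh l).
  by apply: (fin_sem (sem_sym Bz)); case: (Hz 0%N).
move=> i.
apply: (Btr_sem _ (Btr_bd (deg_opp (deg_tr (k - i%:Z) (deg_psum i (fun l => match Hh l with And4 d _ _ _ => d end))))
   (fin_opp (fin_tr (k - i%:Z) (fin_psum i (fun l => match Hh l with And4 _ d _ _ => d end))))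
   (trunc_opp (@trunc_tr (k - i%:Z) _)))).
have Es : sem (bsum (fun l => bd (shift h i l))) (z i).
  apply: sem_trans (bsum_sem (h' := fun l => badd (shift z i l) (bopp (shift z i l.+1))) _) _.
    by move=> l; exact: Eh.
  exact: (bsum_tele (TF_shift i Tz)).
move=> a b M f bf; rewrite (bd_opp _ bf) val_badd !val_bopp // /gm.
rewrite (sem_bd (bsum_split i Th) bf) (bd_add _ _ bf) val_badd.
rewrite (bsum_bd (TF_shift i Th) bf) (Es _ _ _ _ bf).
by rewrite opprD addrCA subrr addr0.
Qed.

End Proofs.
End Bounded.

End Main.

Theorem corollary3p7 (R : pzRingType) (X : complex R^c) (Y : complex R)
    (k : int) (hk : sup_eq Y k) (n : int) :
  (exists (f : sq_car (Hlim1 X Y k (n + 1)) -> sq_car (Hcheck X Y (n + 1)))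
          (g : sq_car (Hcheck X Y (n + 1)) -> sq_car (Hlim X Y k n)),
      short_exact f g)
  /\ (sq_trivial (Hcheck X Y (n + 1)) <->
      sq_trivial (Hlim1 X Y k (n + 1)) /\ sq_trivial (Hlim X Y k n)).
Proof.
have hk' := hk.2.
have fB : forall z w : nat -> bi X Y,
    (forall i : nat, Ztr (n + 1) (k - i%:Z) (w i)) ->
    (forall i : nat, Btr (n + 1) (k - i%:Z) (badd (z i) (bopp (badd (w i) (bopp (w i.+1)))))) ->
    BC (n + 1) (bsum k z).
  move=> z w Hw HB; have [h Hh] := choose_Btr HB; exact: (f_B Hw Hh).
split.
  exists (bsum k), (gm k); split.
  - split.
    + by move=> z Hz; exact: (f_Z Hz).
    + by move=> z [w [Hw HB]]; exact: (fB z w Hw HB).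
    + by move=> x y _ _; exact: f_add.
  - split.
    + by move=> F [D Fb]; exact: (g_Z hk' D Fb).
    + by move=> F [G [C [DG DC FC E]]] i; exact: (g_B k DG DC FC E).
    + by move=> x y _ _ i; exact: g_add.
  - by move=> z Hz HB; exact: (f_inj Hz HB).
  - move=> y [D Fb]; split.
    + by move=> HB; exact: (mid_to hk' D HB).
    + by move=> [x [Hx HB]]; exact: (mid_from Hx HB).
  - by move=> z [Hz HB]; exact: (surj Hz HB).
split.
- move=> Hc; split.
  + move=> z Hz; apply: (f_inj Hz); apply: Hc; exact: (f_Z Hz).
  + move=> z [Hz HB]; have [y [Zy By]] := surj Hz HB.
    have Gy := Hc y Zy; case: Gy => [G [C [DG DC FC E]]].
    move=> i; apply: (Btr_sem _ (Btr_add (By i) (g_B k DG DC FC E i))).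
    by move=> a b M f bf; rewrite !val_badd val_bopp // addrNK.
- move=> [H1 H2] y [D Fb].
  have [Zg Bg] := g_Z hk' D Fb.
  have [x [Hx HB]] := mid_to hk' D (H2 _ (conj Zg Bg)).
  have [w [Hw HB']] := H1 x Hx.
  apply: (BC_sem _ (BC_add HB (fB x w Hw HB'))).
  by move=> a b M f bf; rewrite !val_badd val_bopp // addrNK.
Qed.
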